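(* Let $\mathbf{S}$ be a strong quasi-Wajsberg* algebra. Then there exist a Wajsberg* algebra $\mathbf{M}$ and a flat strong quasi-Wajsberg* algebra $\mathbf{FW^*}$ such that $\mathbf{S}$ can be embedded (by an injective homomorphism) into the direct product $\mathbf{M}\times\mathbf{FW^*}$.
   Context: A quasi-Wajsberg* algebra is an algebra $\langle W;\to,\neg,{}^+,{}^-,1\rangle$ of type $\langle 2,1,1,1,0\rangle$ (${}^+,{}^-$ bind more tightly than $\neg$, which binds more tightly than $\to$) such that for all $x,y,z$: (1) $x\to y=\neg y\to\neg x$; (2) $(x\to 1)\to((y\to 1)\to z)=(y\to 1)\to((x\to 1)\to z)$; (3) $(1\to x)\to 1=1$; (4) $(z\to z)\to(x\to y)=x\to y$; (5) $(1\to 1)\to x^{+}=((1\to 1)\to x)^{+}=(x\to 1)\to 1$ and $(1\to 1)\to x^{-}=((1\to 1)\to x)^{-}=(x\to\neg 1)\to\neg 1$; (6) $x\to y=(y^{+}\to x^{-})\to(x^{+}\to y^{-})$; (7) $\neg(x\to y)=y\to x$; (8) $\neg\neg x=x$; (9) $(x\to(\neg x\to y))^{+}=x^{+}\to(\neg x^{+}\to y^{+})$; (10) $x\vee y=y\vee x$; (11) $x\vee(y\vee z)=(x\vee y)\vee z$; (12) $x\to(y\vee z)=(x\to y)\vee(x\to z)$; where $x\vee y:=((x^{+}\to y^{+})^{+}\to(\neg x)^{-})\to((y^{-}\to x^{-})^{-}\to x^{-})$. It is strong if $x^+=(1\to 1)\to x^+$ and $x^-=(1\to 1)\to x^-$ for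 all $x$, and flat if $1\to 1=1$. A Wajsberg* algebra is an algebra $\langle M;\to,\neg,1\rangle$ of type $\langle 2,1,0\rangle$ such that, with $x^+:=(x\to 1)\to 1$, $x^-:=(x\to\neg 1)\to\neg 1$ and $\vee$ defined by the same formula, for all $x,y,z$: $x\to y=\neg y\to\neg x$; $(x\to 1)\to((y\to 1)\to z)=(y\to 1)\to((x\to 1)\to z)$; $(1\to x)\to 1=1$; $(y\to y)\to x=x$; $x\to y=(y^+\to x^-)\to(x^+\to y^-)$; $\neg(x\to y)=y\to x$; $\neg\neg x=x$; $(x\to(\neg x\to y))^+=x^+\to(\neg x^+\to y^+)$; $x\vee y=y\vee x$; $x\vee(y\vee z)=(x\vee y)\vee z$; $x\to(y\vee z)=(x\to y)\vee(x\to z)$. A Wajsberg* algebra is regarded as an algebra in the language $\langle\to,\neg,{}^+,{}^-,1\rangle$ with these defined ${}^+,{}^-$; direct products have coordinatewise operations and homomorphisms preserve $\to,\neg,{}^+,{}^-,1$. *)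

(* Defs.v *)
Record qw_sig := QWSig {
  qcar : Type;
  qimp : qcar -> qcar -> qcar;
  qneg : qcar -> qcar;
  qplus : qcar -> qcar;
  qminus : qcar -> qcar;
  qone : qcar
}.

Definition gjoin {A : Type} (imp : A -> A -> A) (neg plus minus : A -> A)
  (x y : A) : A :=
  imp (imp (plus (imp (plus x) (plus y))) (minus (neg x)))
      (imp (minus (imp (minus y) (minus x))) (minus x)).

Definition is_quasi_wajsberg_star (W : qw_sig) : Prop :=
  let imp := qimp W in let neg := qneg W in let pl := qplus W in
  let mi := qminus W in let one := qone W in
  let join := gjoin imp neg pl mi in
  (forall x y, imp x y = imp (neg y) (neg x)) /\
  (forall x y z, imp (imp x one) (imp (imp y one) z)
                 = imp (imp y one) (imp (imp x one) z)) /\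
  (forall x, imp (imp one x) one = one) /\
  (forall x y z, imp (imp z z) (imp x y) = imp x y) /\
  (forall x, imp (imp one one) (pl x) = pl (imp (imp one one) x) /\
             pl (imp (imp one one) x) = imp (imp x one) one) /\
  (forall x, imp (imp one one) (mi x) = mi (imp (imp one one) x) /\
             mi (imp (imp one one) x) = imp (imp x (neg one)) (neg one)) /\
  (forall x y, imp x y = imp (imp (pl y) (mi x)) (imp (pl x) (mi y))) /\
  (forall x y, neg (imp x y) = imp y x) /\
  (forall x, neg (neg x) = x) /\
  (forall x y, pl (imp x (imp (neg x) y)) = imp (pl x) (imp (neg (pl x)) (pl y))) /\
  (forall x y, join x y = join y x) /\
  (forall x y z, join x (join y z) = join (join x y) z) /\
  (forall x y z, imp x (join y z) = join (imp x y) (imp x z)).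

Definition qw_strong (W : qw_sig) : Prop :=
  forall x, qplus W x = qimp W (qimp W (qone W) (qone W)) (qplus W x) /\
            qminus W x = qimp W (qimp W (qone W) (qone W)) (qminus W x).

Definition qw_flat (W : qw_sig) : Prop :=
  qimp W (qone W) (qone W) = qone W.

Record w_sig := WSig {
  wcar : Type;
  wimp : wcar -> wcar -> wcar;
  wneg : wcar -> wcar;
  wone : wcar
}.

Definition wplus (M : w_sig) (x : wcar M) : wcar M :=
  wimp M (wimp M x (wone M)) (wone M).
Definition wminus (M : w_sig) (x : wcar M) : wcar M :=
  wimp M (wimp M x (wneg M (wone M))) (wneg M (wone M)).

Definition is_wajsberg_star (M : w_sig) : Prop :=
  let imp := wimp M in let neg := wneg M in let pl := wplus M in
  let mi := wminus M in let one := wone M in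
  let join := gjoin imp neg pl mi in
  (forall x y, imp x y = imp (neg y) (neg x)) /\
  (forall x y z, imp (imp x one) (imp (imp y one) z)
                 = imp (imp y one) (imp (imp x one) z)) /\
  (forall x, imp (imp one x) one = one) /\
  (forall x y, imp (imp y y) x = x) /\
  (forall x y, imp x y = imp (imp (pl y) (mi x)) (imp (pl x) (mi y))) /\
  (forall x y, neg (imp x y) = imp y x) /\
  (forall x, neg (neg x) = x) /\
  (forall x y, pl (imp x (imp (neg x) y)) = imp (pl x) (imp (neg (pl x)) (pl y))) /\
  (forall x y, join x y = join y x) /\
  (forall x y z, join x (join y z) = join (join x y) z) /\
  (forall x y z, imp x (join y z) = join (imp x y) (imp x z)).

Definition w_as_qw (M : w_sig) : qw_sig :=
  QWSig (wcar M) (wimp M) (wneg M) (wplus M) (wminus M) (wone M).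

Definition qw_prod (A B : qw_sig) : qw_sig :=
  QWSig (qcar A * qcar B)
    (fun x y => (qimp A (fst x) (fst y), qimp B (snd x) (snd y)))
    (fun x => (qneg A (fst x), qneg B (snd x)))
    (fun x => (qplus A (fst x), qplus B (snd x)))
    (fun x => (qminus A (fst x), qminus B (snd x)))
    (qone A, qone B).

Definition qw_hom (A B : qw_sig) (f : qcar A -> qcar B) : Prop :=
  (forall x y, f (qimp A x y) = qimp B (f x) (f y)) /\
  (forall x, f (qneg A x) = qneg B (f x)) /\
  (forall x, f (qplus A x) = qplus B (f x)) /\
  (forall x, f (qminus A x) = qminus B (f x)) /\
  f (qone A) = qone B.

Definition qw_embedding (A B : qw_sig) (f : qcar A -> qcar B) : Prop :=
  qw_hom A B f /\ (forall x y, f x = f y -> x = y).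

(* Main.v *)
Require Import Defs.
From Stdlib Require Import ProofIrrelevance Classical ClassicalDescription.

Definition regS (S : qw_sig) (x : qcar S) : Prop :=
  qimp S (qimp S (qone S) (qone S)) x = x.

Ltac dHS HS := cbv zeta in HS;
  destruct HS as (A1&A2&A3&A4&A5&A6&A7&A8&A9&A10&A11&A12&A13).

Lemma reg_imp S (HS : is_quasi_wajsberg_star S) x y : regS S (qimp S x y).
Proof. unfold regS. dHS HS. apply A4. Qed.

Lemma reg_one S (HS : is_quasi_wajsberg_star S) : regS S (qone S).
Proof. unfold regS. dHS HS. apply A3. Qed.

Lemma e_neg S (HS : is_quasi_wajsberg_star S) x :
  qimp S (qimp S (qone S) (qone S)) (qneg S x) = qneg S (qimp S (qimp S (qone S) (qone S)) x).
Proof.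
  pose proof HS as HS'. dHS HS.
  rewrite A8. rewrite (A1 x). rewrite A8. reflexivity.
Qed.

Lemma reg_neg S (HS : is_quasi_wajsberg_star S) x : regS S x -> regS S (qneg S x).
Proof. unfold regS. intro H. rewrite e_neg by exact HS. now rewrite H. Qed.

Lemma pl_def S (HS : is_quasi_wajsberg_star S) (Hst : qw_strong S) x :
  qplus S x = qimp S (qimp S x (qone S)) (qone S).
Proof. dHS HS. destruct (Hst x) as [H _]. rewrite H. destruct (A5 x) as [B C].
  now rewrite B, C. Qed.

Lemma mi_def S (HS : is_quasi_wajsberg_star S) (Hst : qw_strong S) x :
  qminus S x = qimp S (qimp S x (qneg S (qone S))) (qneg S (qone S)).
Proof. dHS HS. destruct (Hst x) as [_ H]. rewrite H. destruct (A6 x) as [B C].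
  now rewrite B, C. Qed.

Lemma pl_e S (HS : is_quasi_wajsberg_star S) (Hst : qw_strong S) x :
  qplus S (qimp S (qimp S (qone S) (qone S)) x) = qplus S x.
Proof. dHS HS. destruct (Hst x) as [H _]. destruct (A5 x) as [B C].
  rewrite <- B. now rewrite <- H. Qed.

Lemma mi_e S (HS : is_quasi_wajsberg_star S) (Hst : qw_strong S) x :
  qminus S (qimp S (qimp S (qone S) (qone S)) x) = qminus S x.
Proof. dHS HS. destruct (Hst x) as [_ H]. destruct (A6 x) as [B C].
  rewrite <- B. now rewrite <- H. Qed.

Lemma e_imp S (HS : is_quasi_wajsberg_star S) (Hst : qw_strong S) x y :
  qimp S (qimp S (qimp S (qone S) (qone S)) x) (qimp S (qimp S (qone S) (qone S)) y)
  = qimp S (qimp S (qone S) (qone S)) (qimp S x y).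
Proof.
  pose proof HS as HS'. dHS HS.
  rewrite A7. rewrite !pl_e, !mi_e by assumption. rewrite <- A7. now rewrite A4.
Qed.

Definition Mcar S := {x : qcar S | regS S x}.

Definition Msig S (HS : is_quasi_wajsberg_star S) : w_sig :=
  WSig (Mcar S)
    (fun a b => exist _ (qimp S (proj1_sig a) (proj1_sig b)) (reg_imp S HS _ _))
    (fun a => exist _ (qneg S (proj1_sig a)) (reg_neg S HS _ (proj2_sig a)))
    (exist _ (qone S) (reg_one S HS)).

Lemma val_inj S (a b : Mcar S) : proj1_sig a = proj1_sig b -> a = b.
Proof.
  destruct a as [a pa], b as [b pb]; simpl; intro H; subst.
  f_equal; apply proof_irrelevance.
Qed.

Lemma val_join S HS (Hst : qw_strong S) (a b : Mcar S) :
  proj1_sig (gjoin (wimp (Msig S HS)) (wneg (Msig S HS)) (wplus (Msig S HS))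
     (wminus (Msig S HS)) a b)
  = gjoin (qimp S) (qneg S) (qplus S) (qminus S) (proj1_sig a) (proj1_sig b).
Proof.
  unfold gjoin, wplus, wminus; simpl. rewrite !(pl_def S HS Hst), !(mi_def S HS Hst).
  reflexivity.
Qed.

Lemma M_ok S HS (Hst : qw_strong S) : is_wajsberg_star (Msig S HS).
Proof.
  pose proof HS as HS0. dHS HS0. rename HS into HS'.
  cbv zeta.
  repeat split; intros; apply val_inj;
    cbn [proj1_sig wimp wneg wone Msig];
    try rewrite !val_join by assumption;
    cbn [proj1_sig wimp wneg wone Msig];
    try rewrite !val_join by assumption;
    unfold wplus, wminus; simpl.
  - apply A1.
  - apply A2.
  - apply A3.
  - destruct x as [x px]; simpl. unfold regS in px.
    rewrite <- px. apply A4.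
  - rewrite <- !(pl_def S HS' Hst), <- !(mi_def S HS' Hst). apply A7.
  - apply A8.
  - apply A9.
  - rewrite <- !(pl_def S HS' Hst). apply A10.
  - apply A11.
  - apply A12.
  - apply A13.
Qed.

Definition Fsig S : qw_sig :=
  QWSig (option (qcar S)) (fun _ _ => None) (option_map (qneg S))
    (fun _ => None) (fun _ => None) None.

Lemma F_ok S (HS : is_quasi_wajsberg_star S) :
  is_quasi_wajsberg_star (Fsig S) /\ qw_strong (Fsig S) /\ qw_flat (Fsig S).
Proof.
  dHS HS. unfold is_quasi_wajsberg_star, qw_strong, qw_flat; cbv zeta.
  repeat split; intros; simpl; try reflexivity.
  destruct x; simpl; now rewrite ?A9.
Qed.

Theorem corollary3p2 (S : qw_sig) :
  is_quasi_wajsberg_star S -> qw_strong S ->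
  exists (M : w_sig) (F : qw_sig),
    is_wajsberg_star M /\
    is_quasi_wajsberg_star F /\ qw_strong F /\ qw_flat F /\
    exists f : qcar S -> qcar (qw_prod (w_as_qw M) F),
      qw_embedding S (qw_prod (w_as_qw M) F) f.
Proof.
  intros HS Hst.
  exists (Msig S HS), (Fsig S).
  destruct (F_ok S HS) as (F1 & F2 & F3).
  split; [apply M_ok; exact Hst|].
  split; [exact F1|]. split; [exact F2|]. split; [exact F3|].
  pose (g := fun x : qcar S =>
    if excluded_middle_informative (regS S x) then @None (qcar S) else Some x).
  assert (Hreg : forall x, regS S (qimp S (qimp S (qone S) (qone S)) x))
    by (intro; apply reg_imp; exact HS).
  assert (gN : forall x, regS S x -> g x = None).
  { intros x H; unfold g; destruct excluded_middle_informative; [reflexivity|contradiction]. }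
  exists (fun x => (exist _ _ (Hreg x) : Mcar S, g x)).
  pose proof HS as HS'. dHS HS'.
  split; [repeat split|].
  - intros x y. simpl. f_equal.
    + apply val_inj; simpl. symmetry. apply e_imp; assumption.
    + apply gN, reg_imp; exact HS.
  - intros x. simpl. f_equal.
    + apply val_inj; simpl. apply e_neg; exact HS.
    + unfold g. destruct (excluded_middle_informative (regS S x)) as [r|r];
      destruct (excluded_middle_informative (regS S (qneg S x))) as [r'|r']; simpl;
      try reflexivity.
      * exfalso; apply r'; apply reg_neg; assumption.
      * exfalso; apply r. rewrite <- (A9 x). apply reg_neg; assumption.
  - intros x. simpl. f_equal.
    + apply val_inj; simpl. unfold wplus; simpl.
      rewrite <- (pl_def S HS Hst). destruct (A5 x) as [B _]. exact B.
    + apply gN. unfold regS. destruct (Hst x) as [H _]. now rewrite <- H.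
  - intros x. simpl. f_equal.
    + apply val_inj; simpl. unfold wminus; simpl.
      rewrite <- (mi_def S HS Hst). destruct (A6 x) as [B _]. exact B.
    + apply gN. unfold regS. destruct (Hst x) as [_ H]. now rewrite <- H.
  - simpl. f_equal.
    + apply val_inj; simpl. apply A3.
    + apply gN, reg_one; exact HS.
  - intros x y H. injection H as H1 H2.
    simpl in H1.
    unfold g in H2.
    destruct (excluded_middle_informative (regS S x)) as [r|r];
    destruct (excluded_middle_informative (regS S y)) as [r'|r']; try discriminate.
    + unfold regS in r, r'. now rewrite <- r, <- r'.
    + now injection H2.
Qed.
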